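(* For all positive integers $m,n$, $\Lambda(m,n)=\left([0,1)^{m\times n}\times[0,1)^m\right)\setminus\mathbf{Bad}(m,n)$.
   Context: $[0,1)^{m\times n}$ is the set of real $m\times n$ matrices with entries in $[0,1)$. For $\boldsymbol{x}\in\mathbb{R}^n$, $\|\boldsymbol{x}\|=\max_i|x_i|$; for $\boldsymbol{y}\in\mathbb{R}^m$, $\langle\boldsymbol{y}\rangle=\min_{\boldsymbol{p}\in\mathbb{Z}^m}\|\boldsymbol{y}-\boldsymbol{p}\|$. For $\psi:\mathbb{N}\to[0,\infty)$, $W_{m,n}(\psi)$ is the set of pairs $(A,\boldsymbol{\gamma})\in[0,1)^{m\times n}\times[0,1)^m$ such that $\langle A\boldsymbol{q}-\boldsymbol{\gamma}\rangle<\psi(\|\boldsymbol{q}\|)$ for infinitely many $\boldsymbol{q}\in\mathbb{Z}^n$. ''Decreasing'' means non-increasing. $\mathcal{C}$ is the set of decreasing $\psi:\mathbb{N}\to[0,\infty)$ with $\sum_{q\ge1}q^{n-1}\psi(q)^m<\infty$. $\Lambda(m,n)=\bigcup_{\psi\in\mathcal{C}}W_{m,n}(\psi)$. $\mathbf{Bad}(m,n)=\{(A,\boldsymbol{\gamma})\in[0,1)^{m\times n}\times[0,1)^m:\liminf_{\boldsymbol{q}\in\mathbb{Z}^n,\|\boldsymbol{q}\|\to\infty}\|\boldsymbol{q}\|^n\langle A\boldsymbol{q}-\boldsymbol{\gamma}\rangle^m>0\}$. *)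

(* Defs.v *)
From HB Require Import structures.
From mathcomp Require Import all_boot all_order all_algebra.
From mathcomp Require Import all_classical all_reals all_analysis.
Unset Printing Implicit Defensive.
Import Order.TTheory GRing.Theory Num.Theory.
Import numFieldNormedType.Exports.
Local Open Scope classical_set_scope.
Local Open Scope ring_scope.

Section Defs.
Variable R : realType.

Definition supn_int (n : nat) (q : 'cV[int]_n) : nat := \max_(i < n) `|q i ord0|%N.

Definition supn_real (m : nat) (x : 'cV[R]_m) : R := \big[Num.max/0]_(i < m) `|x i ord0|.

(* <y> = min_{p in Z^m} ||y - p||  (the minimum is attained, so it is this infimum) *)
Definition dist_intv (m : nat) (y : 'cV[R]_m) : R :=
  inf [set r : R | exists p : 'cV[int]_m, r = supn_real m (y - map_mx (fun z : int => z%:~R) p)].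

Definition box (m n : nat) : set ('M[R]_(m, n) * 'cV[R]_m) :=
  [set Ag : 'M[R]_(m, n) * 'cV[R]_m | (forall i j, 0 <= Ag.1 i j < 1) /\ (forall i, 0 <= Ag.2 i ord0 < 1)].

Definition affine_form (m n : nat) (A : 'M[R]_(m, n)) (g : 'cV[R]_m) (q : 'cV[int]_n)
  : 'cV[R]_m := A *m map_mx (fun z : int => z%:~R) q - g.

Definition W (m n : nat) (psi : nat -> R) : set ('M[R]_(m, n) * 'cV[R]_m) :=
  [set Ag : 'M[R]_(m, n) * 'cV[R]_m | box m n Ag /\
     ~ finite_set [set q : 'cV[int]_n |
          dist_intv m (affine_form m n Ag.1 Ag.2 q) < psi (supn_int n q)]].

Definition classC (m n : nat) (psi : nat -> R) : Prop :=
  (forall k, (0 < k)%N -> 0 <= psi k) /\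
  (forall a b, (0 < a)%N -> (a <= b)%N -> psi b <= psi a) /\
  cvgn (series (fun k : nat => (k.+1)%:R ^+ n.-1 * psi k.+1 ^+ m)).

Definition Lambda (m n : nat) : set ('M[R]_(m, n) * 'cV[R]_m) :=
  [set Ag : 'M[R]_(m, n) * 'cV[R]_m | exists psi : nat -> R, classC m n psi /\ W m n psi Ag].

(* Bad(m,n): liminf_{||q|| -> oo} ||q||^n <Aq - gamma>^m > 0, i.e. there are
   c > 0 and N such that ||q||^n <Aq - gamma>^m >= c whenever ||q|| >= N *)
Definition Bad (m n : nat) : set ('M[R]_(m, n) * 'cV[R]_m) :=
  [set Ag : 'M[R]_(m, n) * 'cV[R]_m | box m n Ag /\
     exists c : R, 0 < c /\ exists N : nat, forall q : 'cV[int]_n, (N <= supn_int n q)%N ->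
        c <= (supn_int n q)%:R ^+ n * dist_intv m (affine_form m n Ag.1 Ag.2 q) ^+ m].

End Defs.

(* Main.v *)
Require Import Defs.
From HB Require Import structures.
From mathcomp Require Import all_boot all_order all_algebra.
From mathcomp Require Import all_classical all_reals all_analysis.
From mathcomp Require Import zify ring lra.
Import Order.TTheory GRing.Theory Num.Theory.
Local Open Scope classical_set_scope.
Local Open Scope ring_scope.

Lemma supn_real_ge0 (R : realType) m (x : 'cV[R]_m) : 0 <= supn_real R m x.
Proof. rewrite /supn_real; elim/big_ind: _ => //= a b ha hb; by rewrite le_max ha. Qed.

Lemma dist_ge0 (R : realType) m (y : 'cV[R]_m) : 0 <= dist_intv R m y.
Proof.
apply: lb_le_inf.
  by exists (supn_real R m (y - map_mx (fun z : int => z%:~R) 0)); exists 0.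
by move=> r [p ->]; apply: supn_real_ge0.
Qed.

Lemma bounded_finite n N : finite_set [set q : 'cV[int]_n | (supn_int n q <= N)%N].
Proof.
pose f := fun g : {ffun 'I_n -> 'I_(N.*2.+1)} => \col_i ((g i)%:Z - N%:Z) : 'cV[int]_n.
apply: (sub_finite_set _ (finite_image f (@finite_finset _ setT))).
move=> q /= hq.
have hi : forall i, (`|q i ord0| <= N)%N.
  move=> i; apply: leq_trans hq; rewrite /supn_int.
  exact: (@leq_bigmax _ (fun i => `|q i ord0|%N) i).
exists [ffun i => inord (absz (q i ord0 + N%:Z))] => //.
apply/matrixP => i j; rewrite !mxE ffunE (ord1 j) inordK; last first.
  have := hi i; lia.
have := hi i; move: (q i ord0) => z.
move=> hz; rewrite abszE ger0_norm; first by rewrite addrK.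
have := ler_norm (- z); rewrite normrN; move: hz; case: z => k /=; lia.
Qed.
Lemma psi_small {R : realType} m n (psi : nat -> R) : (0 < n)%N -> classC R m n psi ->
  forall c, 0 < c -> exists K0, forall K, (K0 <= K)%N -> K%:R ^+ n * psi K ^+ m < c.
Proof.
move=> n0 [h0 [hdec hcv]] c c0.
set u := fun k : nat => (k.+1)%:R ^+ n.-1 * psi k.+1 ^+ m.
have u0 : forall k, 0 <= u k.
  by move=> k; rewrite /u mulr_ge0 // exprn_ge0 // h0.
have nd : nondecreasing_seq (series u).
  by move=> a b ab; apply: (@nondecreasing_series _ u xpredT 0%N) => // k _ _; apply: u0.
have le_l := nondecreasing_cvgn_le nd hcv.
have e0 : 0 < c / 3 ^+ n by rewrite divr_gt0 // exprn_gt0.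
have := hcv; move/cvgrPdist_lt/(_ _ e0) => [M _ HM].
exists (M.*2.+2) => K hK.
set k := K./2.
have hk1 : (k * 2 <= K)%N by rewrite muln2 -geq_half_double.
have hk2 : (K <= k * 2 + 1)%N by rewrite muln2 addn1 -leq_half_double.
have hMk : (M <= k)%N by rewrite geq_half_double; lia.
have k1 : (1 <= k)%N by rewrite geq_half_double; lia.
have Hs : k%:R ^+ n * psi K ^+ m <= \sum_(k <= j < K) u j.
  apply: (@le_trans _ _ (\sum_(k <= j < K) (k%:R ^+ n.-1 * psi K ^+ m))).
    rewrite sumr_const_nat -[_ *+ (K - k)]mulr_natr -{1}(prednK n0) exprSr mulrAC.
    rewrite ler_wpM2l //; last by rewrite ler_nat; lia.
    by rewrite mulr_ge0 // exprn_ge0 // h0 //; lia.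
  apply: ler_sum_nat => j /andP[kj jK]; rewrite /u.
  apply: ler_pM; rewrite ?exprn_ge0 ?h0 //; try lia.
    by apply: lerXn2r; rewrite ?nnegrE ?ler_nat //; lia.
  by apply: lerXn2r; rewrite ?nnegrE ?h0 ?hdec //; lia.
have Hl : \sum_(k <= j < K) u j < c / 3 ^+ n.
  have := sub_series u k K; rewrite ifT; last by lia.
  move=> <-; apply: le_lt_trans (HM k hMk).
  by rewrite (le_trans _ (ler_norm _)) // lerB.
have HK : K%:R ^+ n <= 3 ^+ n * k%:R ^+ n :> R.
  rewrite -exprMn; apply: lerXn2r; rewrite ?nnegrE ?mulr_ge0 //.
  by rewrite -natrM ler_nat; lia.
apply: (@le_lt_trans _ _ (3 ^+ n * (k%:R ^+ n * psi K ^+ m))).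
  by rewrite mulrA ler_wpM2r // exprn_ge0 // h0 //; lia.
rewrite mulrC -ltr_pdivlMr ?exprn_gt0 //.
exact: le_lt_trans Hs Hl.
Qed.

Lemma lam_sub (R : realType) m n : (0 < n)%N ->
  Lambda R m n `<=` box R m n `\` Bad R m n.
Proof.
move=> n0 Ag [psi [hC [hbox hinf]]]; split => // -[_ [c [c0 [N HN]]]].
have [K0 HK0] := @psi_small R m n psi n0 hC c c0.
have : ~ ([set q : 'cV[int]_n | dist_intv R m (affine_form R m n Ag.1 Ag.2 q) <
              psi (supn_int n q)] `<=` [set q | (supn_int n q <= maxn N K0)%N]).
  by move=> sub; apply: hinf; apply: sub_finite_set sub (bounded_finite _ _).
move=> /existsNP [q /not_implyP [Sq hq]].
have hQ : (maxn N K0 < supn_int n q)%N by rewrite ltnNge; apply/negP.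
have hN : (N <= supn_int n q)%N by move: hQ; rewrite gtn_max => /andP[] /ltnW.
have hK : (K0 <= supn_int n q)%N by move: hQ; rewrite gtn_max => /andP[] _ /ltnW.
have h1 := HN q hN.
have h2 := HK0 _ hK.
have d0 := @dist_ge0 R m (affine_form R m n Ag.1 Ag.2 q).
have : c < c; last by rewrite ltxx.
apply: le_lt_trans h1 (le_lt_trans _ h2).
rewrite ler_wpM2l ?exprn_ge0 //; apply: lerXn2r; rewrite ?nnegrE //.
  exact: le_trans d0 (ltW Sq).
exact: ltW.
Qed.
Lemma geom (R : realType) N : \sum_(k < N) (2^-1 : R) ^+ k + 2 * (2^-1) ^+ N = 2.
Proof.
elim: N => [|N IH]; first by rewrite big_ord0 add0r expr0 mulr1.
rewrite big_ord_recr /= exprS. move: IH. set S := \sum_(_ < _) _. set y := _ ^+ N. lra.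
Qed.

Lemma geom_le (R : realType) N : \sum_(k < N) (2^-1 : R) ^+ k <= 2.
Proof.
rewrite -{2}(geom R N) lerDl mulr_ge0 // exprn_ge0 // invr_ge0 //.
Qed.

Lemma count_le (R : realType) (C : R) Qv : 0 <= C -> forall T,
  \sum_(t < T) (if (t < Qv)%N then C else 0) <= Qv%:R * C.
Proof.
move=> C0 T; suff : \sum_(t < T) (if (t < Qv)%N then C else 0) <= (minn T Qv)%:R * C.
  move=> h; apply: le_trans h _; rewrite ler_wpM2r // ler_nat; lia.
elim: T => [|T IH]; first by rewrite big_ord0 min0n mul0r.
rewrite big_ord_recr /=; case: ltnP => h.
  have -> : minn T.+1 Qv = (minn T Qv).+1 by lia.
  by rewrite -addn1 natrD mulrDl mul1r lerD2r.
have -> : minn T.+1 Qv = minn T Qv by lia.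
by rewrite addr0.
Qed.

Lemma sumb_le a b (P : nat -> bool) : (\sum_(a <= i < b) P i <= b - a)%N.
Proof.
apply: leq_trans (_ : \sum_(a <= i < b) 1 <= _)%N.
  by apply: leq_sum => i _; apply: leq_b1.
by rewrite sum_nat_const_nat muln1.
Qed.

Lemma box_sub (R : realType) m n : (0 < m)%N -> (0 < n)%N ->
  box R m n `\` Bad R m n `<=` Lambda R m n.
Proof.
move=> m0 n0 Ag [hbox nBad].
pose d := fun q => dist_intv R m (affine_form R m n Ag.1 Ag.2 q).
have H : forall c : R, 0 < c -> forall N, exists q,
    (N <= supn_int n q)%N /\ (supn_int n q)%:R ^+ n * d q ^+ m < c.
  move=> c c0 N; apply: contrapT => Hn; apply: nBad; split => //; exists c.
  split => //; exists N => q hq.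
  rewrite leNgt; apply/negP => hlt; apply: Hn; by exists q.
have H2 : forall kN : nat * nat, exists q, (kN.2 <= supn_int n q)%N /\
    (supn_int n q)%:R ^+ n * d q ^+ m < (2^-1) ^+ kN.1.
  by move=> [k N]; apply: H; rewrite exprn_gt0 // invr_gt0.
have [f Hf] := choice H2.
pose qs := fix g k := match k with 0 => f (0, 1)%N | k'.+1 => f (k, (supn_int n (g k')).+1) end.
pose Q := fun k => supn_int n (qs k).
have HQ0 : (1 <= Q 0)%N := (Hf (0, 1)%N).1.
have HQS : forall k, (Q k < Q k.+1)%N := fun k => (Hf (k.+1, _)).1.
have Hd : forall k, (Q k)%:R ^+ n * d (qs k) ^+ m < (2^-1) ^+ k.
  by case => [|k]; exact: (Hf _).2.
have Qmono : forall a b, (a < b)%N -> (Q a < Q b)%N.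
  move=> a b; elim: b => // b IH; rewrite ltnS leq_eqVlt => /orP[/eqP->|/IH h].
    exact: HQS.
  exact: ltn_trans h (HQS b).
have Qle : forall a b, (a <= b)%N -> (Q a <= Q b)%N.
  by move=> a b; rewrite leq_eqVlt => /orP[/eqP->//|/Qmono/ltnW].
have Qk : forall k, (k < Q k)%N.
  by elim => [//|k IH]; exact: leq_ltn_trans IH (HQS k).
pose x := fun k => (2^-1) ^+ k / (Q k)%:R ^+ n : R.
have Qpos : forall k, 0 < (Q k)%:R ^+ n :> R.
  by move=> k; rewrite exprn_gt0 // ltr0n; apply: leq_ltn_trans (Qk k).
have x0 : forall k, 0 < x k.
  by move=> k; rewrite divr_gt0 // exprn_gt0 // invr_gt0.
pose eps := fun k => x k `^ (m%:R^-1).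
have epsm : forall k, eps k ^+ m = x k.
  move=> k; rewrite -powR_mulrn ?powR_ge0 // -powRrM mulVf ?pnatr_eq0 -?lt0n //.
  by rewrite powRr1 // ltW.
have eps0 : forall k, 0 <= eps k by move=> k; apply: powR_ge0.
have epsdec : forall a b, (a <= b)%N -> eps b <= eps a.
  move=> a b ab; apply: ge0_ler_powR; rewrite ?nnegrE ?invr_ge0 ?ler0n //; try exact: (ltW (x0 _)).
  rewrite /x; apply: ler_pM; rewrite ?exprn_ge0 ?invr_ge0 //.
    by apply: ler_wiXn2l; rewrite ?invr_ge0 ?invf_le1 ?ler1n.
  rewrite lef_pV2 ?posrE //; apply: lerXn2r; rewrite ?nnegrE ?ler0n ?ler_nat //.
  exact: Qle.
have deps : forall k, d (qs k) < eps k.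
  move=> k; have := Hd k; rewrite mulrC -ltr_pdivlMr // => h.
  have dk0 : 0 <= d (qs k) by apply: dist_ge0.
  by rewrite -(ltr_pXn2r m0) ?nnegrE // epsm.
pose j := fun t => (\sum_(0 <= i < t) (Q i < t))%N.
pose psi := fun t => eps (j t).
have jmono : forall a b, (a <= b)%N -> (j a <= j b)%N.
  move=> a b ab; rewrite /j (big_cat_nat (leq0n a) ab) /=.
  apply: leq_trans (leq_addr _ _); apply: leq_sum => i _.
  by case: (ltnP (Q i) a) => //= h; rewrite (leq_trans h ab).
have jQ : forall k, (j (Q k) <= k)%N.
  move=> k; rewrite /j (big_cat_nat (leq0n k) (ltnW (Qk k))) /=.
  rewrite (@eq_big_nat _ _ _ k (Q k) _ (fun _ => 0%N)); last first.
    by move=> i /andP[ki _]; rewrite ltnNge Qle.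
  rewrite sum_nat_const_nat muln0 addn0.
  by have := sumb_le 0 k (fun i => Q i < Q k)%N; rewrite subn0.
have key : forall t s, (s < t)%N -> (Q s < t)%N -> (s.+1 <= j t)%N.
  move=> t s st Qst; rewrite /j (big_cat_nat (leq0n s.+1) st) /=.
  apply: leq_trans (leq_addr _ _).
  rewrite (@eq_big_nat _ _ _ 0 s.+1 _ (fun _ => 1%N)); last first.
    by move=> i /andP[_ hi]; rewrite (leq_ltn_trans (Qle _ _ _) Qst).
  by rewrite sum_nat_const_nat muln1 subn0.
have jle : forall t, (t <= Q (j t))%N.
  move=> t; rewrite leqNgt; apply/negP => h.
  have := key t (j t) (ltn_trans (Qk _) h) h; by rewrite ltnn.
have jid : forall t, (j t <= t)%N.
  by move=> t; have := sumb_le 0 t (fun i => Q i < t)%N; rewrite subn0.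
exists psi; split; last first.
  split => // fin.
  have : finite_set (qs @^-1` [set q | d q < psi (supn_int n q)]).
    apply: finite_preimage => // a b _ _ hab.
    case: (ltngtP a b) => // h; have := Qmono _ _ h; by rewrite /Q hab ltnn.
  have -> : qs @^-1` [set q | d q < psi (supn_int n q)] = setT.
    apply/seteqP; split => // k _ /=.
    by apply: lt_le_trans (deps k) (epsdec _ _ (jQ k)).
  exact: infinite_nat.
split; first by move=> k _; apply: eps0.
split; first by move=> a b _ ab; apply: epsdec; apply: jmono.
pose u := fun k : nat => (k.+1)%:R ^+ n.-1 * psi k.+1 ^+ m.
have u0 : forall k, 0 <= u k.
  by move=> k; rewrite /u mulr_ge0 // exprn_ge0 // eps0.
apply: nondecreasing_is_cvgn.
  by move=> a b ab; apply: (@nondecreasing_series _ u xpredT 0%N) => // k _ _; apply: u0.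
exists 2 => _ [T _ <-].
pose G := fun (t k : nat) => if (t.+1 <= Q k)%N then (t.+1)%:R ^+ n.-1 * eps k ^+ m else 0.
have G0 : forall t k, 0 <= G t k.
  by move=> t k; rewrite /G; case: ifP => // _; rewrite mulr_ge0 // exprn_ge0.
rewrite /series /= big_mkord.
apply: (@le_trans _ _ (\sum_(t < T) \sum_(k < T.+1) G t k)).
  apply: ler_sum => t _.
  have hk : (j t.+1 < T.+1)%N by rewrite ltnS (leq_trans (jid _)).
  rewrite (bigD1 (Ordinal hk)) //= /G ifT ?jle //.
  by rewrite /psi lerDl sumr_ge0 // => i _; apply: (G0 t i).
rewrite exchange_big /=.
apply: le_trans (geom_le R T.+1).
apply: ler_sum => k _.
apply: (@le_trans _ _ (\sum_(t < T) (if (t < Q k)%N then (Q k)%:R ^+ n.-1 * eps k ^+ m else 0))).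
  apply: ler_sum => t _; rewrite /G; case: ifP => // h.
  rewrite ler_wpM2r ?exprn_ge0 //; apply: lerXn2r; rewrite ?nnegrE ?ler_nat //.
have C0 : 0 <= (Q k)%:R ^+ n.-1 * eps k ^+ m by rewrite mulr_ge0 // exprn_ge0.
apply: le_trans (@count_le R _ (Q k) C0 T) _.
rewrite mulrA -exprS prednK // epsm /x mulrC divfK //.
by rewrite gt_eqF.
Qed.

Theorem theorem1p6 (R : realType) (m n : nat) :
  (0 < m)%N -> (0 < n)%N ->
  Lambda R m n = box R m n `\` Bad R m n.
Proof.
move=> m0 n0; apply/seteqP; split; first exact: lam_sub.
exact: box_sub.
Qed.
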